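(* Let $\Sigma\in\mathbb{R}^{p\times p}$ with $\Sigma\succ0$, $\theta_0\in\mathbb{R}^p$, $S=\mathrm{supp}(\theta_0)$, and for $\xi>0$ let $\widehat\theta^\infty(\xi)$ be the unique minimizer of $\theta\mapsto\frac12\langle\theta-\theta_0,\Sigma(\theta-\theta_0)\rangle+\xi\|\theta\|_1$. Then there exist $\xi_0=\xi_0(\Sigma,S,\theta_0)>0$, $T_0\subseteq[p]$, $v_0\in\{-1,0,+1\}^p$ such that for all $\xi\in(0,\xi_0)$, $\mathrm{sign}(\widehat\theta^\infty(\xi))=v_0$ and $\mathrm{supp}(\widehat\theta^\infty(\xi))=\mathrm{supp}(v_0)=T_0$. Further $T_0\supseteq S$, $v_{0,S}=\mathrm{sign}(\theta_{0,S})$, and $\xi_0=\min_{i\in S}\big|\theta_{0,i}/[\Sigma_{T_0,T_0}^{-1}v_{0,T_0}]_i\big|$.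
   Context: $\mathrm{sign}(u)_i=+1,0,-1$ according as $u_i>0,=0,<0$; $A_{I,J}$ is the submatrix with rows in $I$, columns in $J$; $A_{I,I}^{-1}=(A_{I,I})^{-1}$; $v_I$ is restriction to $I$. *)

(* Defs.v *)
From HB Require Import structures.
From mathcomp Require Import all_boot all_order all_algebra.
From mathcomp Require Import reals constructive_ereal.
Set Implicit Arguments. Unset Strict Implicit. Unset Printing Implicit Defensive.
Import Order.TTheory GRing.Theory Num.Theory.
Local Open Scope ring_scope.

Definition posdef {R : realType} {p : nat} (Sig : 'M[R]_p) : Prop :=
  Sig^T = Sig /\ forall x : 'cV[R]_p, x != 0 -> 0 < (x^T *m Sig *m x) 0 0.

Definition sgn {R : realType} {p : nat} (u : 'cV[R]_p) : 'cV[R]_p :=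
  map_mx (fun x => Num.sg x) u.

Definition supp {R : realType} {p : nat} (u : 'cV[R]_p) : {set 'I_p} :=
  [set i | u i 0 != 0].

Definition l1norm {R : realType} {p : nat} (u : 'cV[R]_p) : R :=
  \sum_(i < p) `|u i 0|.

Definition lasso_obj {R : realType} {p : nat} (Sig : 'M[R]_p) (theta0 : 'cV[R]_p)
  (xi : R) (theta : 'cV[R]_p) : R :=
  2^-1 * (((theta - theta0)^T *m (Sig *m (theta - theta0))) 0 0) + xi * l1norm theta.

(* submatrix A_{T,T}, rows/cols of T in increasing order *)
Definition submxTT {R : realType} {p : nat} (T : {set 'I_p}) (A : 'M[R]_p)
  : 'M[R]_#|T| := \matrix_(i, j) A (enum_val i) (enum_val j).

Definition subvT {R : realType} {p : nat} (T : {set 'I_p}) (v : 'cV[R]_p)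
  : 'cV[R]_#|T| := \col_i v (enum_val i) 0.

(* the entry of w : 'cV_#|T| indexed by i in T (0 if i \notin T) *)
Definition entry_at {R : realType} {p : nat} (T : {set 'I_p}) (w : 'cV[R]_#|T|)
  (i : 'I_p) : R :=
  if [pick k : 'I_#|T| | enum_val k == i] is Some k then w k 0 else 0.

Definition invSv {R : realType} {p : nat} (Sig : 'M[R]_p) (T : {set 'I_p})
  (v : 'cV[R]_p) (i : 'I_p) : R :=
  entry_at (invmx (submxTT T Sig) *m subvT T v) i.

(* |a / b| as an extended real, with the convention |a/0| = +oo *)
Definition absratio {R : realType} (a b : R) : \bar R :=
  if b == 0 then (+oo)%E else (`|a / b|)%:E.

(* Main.v *)
Require Import Defs.
From HB Require Import structures.
From mathcomp Require Import all_boot all_order all_algebra.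
From mathcomp Require Import reals constructive_ereal.
From mathcomp Require Import ring lra.
Import Order.TTheory GRing.Theory Num.Theory.
Local Open Scope ring_scope.

Definition bil {R : realType} {p : nat} (Sig : 'M[R]_p) (x y : 'cV[R]_p) : R :=
  (x^T *m (Sig *m y)) 0 0.

Lemma bilE {R : realType} {p : nat} (Sig : 'M[R]_p) x y :
  bil Sig x y = \sum_i x i 0 * (Sig *m y) i 0.
Proof. by rewrite /bil mxE; apply: eq_bigr => i _; rewrite mxE. Qed.

Lemma bilDl {R : realType} {p : nat} (Sig : 'M[R]_p) x y z :
  bil Sig (x + y) z = bil Sig x z + bil Sig y z.
Proof. by rewrite !bilE -big_split; apply: eq_bigr => i _; rewrite mxE mulrDl. Qed.

Lemma bilDr {R : realType} {p : nat} (Sig : 'M[R]_p) x y z :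
  bil Sig z (x + y) = bil Sig z x + bil Sig z y.
Proof. by rewrite /bil mulmxDr mulmxDr mxE. Qed.

Lemma bilZl {R : realType} {p : nat} (Sig : 'M[R]_p) (a : R) x y :
  bil Sig (a *: x) y = a * bil Sig x y.
Proof. by rewrite !bilE mulr_sumr; apply: eq_bigr => i _; rewrite mxE mulrA. Qed.

Lemma bilZr {R : realType} {p : nat} (Sig : 'M[R]_p) (a : R) x y :
  bil Sig x (a *: y) = a * bil Sig x y.
Proof. by rewrite /bil -scalemxAr -scalemxAr mxE. Qed.

Lemma bilC {R : realType} {p : nat} (Sig : 'M[R]_p) x y :
  Sig^T = Sig -> bil Sig x y = bil Sig y x.
Proof.
move=> hS; rewrite /bil.
have -> : (x^T *m (Sig *m y)) 0 0 = ((x^T *m (Sig *m y))^T) 0 0 by rewrite [RHS]mxE.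
by rewrite !trmx_mul trmxK hS mulmxA.
Qed.

Lemma bil_delta {R : realType} {p : nat} (Sig : 'M[R]_p) (i : 'I_p) y :
  bil Sig (delta_mx i 0) y = (Sig *m y) i 0.
Proof. by rewrite /bil trmx_delta -rowE mxE. Qed.

Lemma bil_delta2 {R : realType} {p : nat} (Sig : 'M[R]_p) (i : 'I_p) :
  bil Sig (delta_mx i 0) (delta_mx i 0) = Sig i i.
Proof. by rewrite bil_delta -colE mxE. Qed.

Lemma bilN {R : realType} {p : nat} (Sig : 'M[R]_p) x y :
  bil Sig (x - y) (x - y) = bil Sig x x - bil Sig x y - bil Sig y x + bil Sig y y.
Proof.
rewrite bilDl !bilDr -!scaleN1r !bilZl !bilZr; ring.
Qed.
Lemma bil_exp {R : realType} {p : nat} (Sig : 'M[R]_p) (t : R) x y :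
  bil Sig (x + t *: y) (x + t *: y) =
  bil Sig x x + t * bil Sig x y + t * bil Sig y x + t ^+ 2 * bil Sig y y.
Proof. rewrite !bilDl !bilDr !bilZl !bilZr; ring. Qed.

Lemma onesided {R : realType} (c b d : R) : 0 < d ->
  (forall t, 0 < t -> t <= d -> 0 <= t * c + t ^+ 2 * b) -> 0 <= c.
Proof.
move=> d0 H; rewrite leNgt; apply/negP => c0.
set t := Num.min d (- c / (`|b| + 1)).
have hb : 0 < `|b| + 1 by rewrite ltr_pwDr // normr_ge0.
have t0 : 0 < t by rewrite lt_min d0 divr_gt0 // oppr_gt0.
have td : t <= d by rewrite ge_min lexx.
have tc : t * (`|b| + 1) <= - c.
  by rewrite -ler_pdivlMr // ge_min lexx orbT.
have bb : b <= `|b| by rewrite ler_norm.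
have := H t t0 td.
have : t * t * b <= t * t * `|b| by rewrite ler_wpM2l // mulr_ge0 // ltW.
have : t * (t * (`|b| + 1)) <= t * (- c) by rewrite ler_wpM2l // ltW.
rewrite expr2. nra.
Qed.

Lemma sg_close {R : realType} (a b : R) : `|a - b| < `|b| -> Num.sg a = Num.sg b.
Proof.
case: (ltrgt0P b) => hb.
- rewrite ltr_norml => /andP [h1 h2].
  by rewrite (gtr0_sg hb) gtr0_sg //; lra.
- rewrite ltr_norml => /andP [h1 h2].
  by rewrite (ltr0_sg hb) ltr0_sg //; lra.
- by rewrite normr_lt0.
Qed.

Lemma objE {R : realType} {p : nat} (Sig : 'M[R]_p) th0 xi th :
  lasso_obj Sig th0 xi th = 2^-1 * bil Sig (th - th0) (th - th0) + xi * l1norm th.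
Proof. by []. Qed.

Lemma l1_delta {R : realType} {p : nat} (th : 'cV[R]_p) (i : 'I_p) (t : R) :
  l1norm (th + t *: delta_mx i 0) = l1norm th - `|th i 0| + `|th i 0 + t|.
Proof.
rewrite /l1norm (bigD1 i) //= [in RHS](bigD1 i) //= !mxE eqxx mulr1.
rewrite (eq_bigr (fun j => `|th j 0|)) => [|j hj]; last first.
  by rewrite !mxE (negbTE hj) mulr0 addr0.
ring.
Qed.

Lemma kkt_nec {R : realType} {p : nat} (Sig : 'M[R]_p) th0 xi th :
  Sig^T = Sig -> 0 < xi ->
  (forall th', lasso_obj Sig th0 xi th <= lasso_obj Sig th0 xi th') ->
  forall i, `|(Sig *m (th - th0)) i 0| <= xi /\
    (th i 0 != 0 -> (Sig *m (th - th0)) i 0 = - xi * Num.sg (th i 0)).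
Proof.
move=> hS xi0 hmin i.
set a := (Sig *m (th - th0)) i 0.
set b := 2^-1 * Sig i i.
have key : forall t, 0 <= t * a + t ^+ 2 * b + xi * (`|th i 0 + t| - `|th i 0|).
  move=> t; have := hmin (th + t *: delta_mx i 0).
  rewrite !objE l1_delta.
  have -> : th + t *: delta_mx i 0 - th0 = (th - th0) + t *: delta_mx i 0.
    by rewrite addrAC.
  set d := th - th0.
  rewrite bil_exp bil_delta2 (bilC _ d) // bil_delta.
  rewrite -/a => h; rewrite -subr_ge0 in h.
  move: h; rewrite /b; set L := l1norm th; set Q := bil Sig d d.
  set A := `|th i 0|; set B := `|th i 0 + t|.
  move=> h; apply: le_trans h _; rewrite le_eqVlt; apply/orP; left; apply/eqP.
  by field.
have [th_i0|th_in0] := eqVneq (th i 0) 0.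
- have h1 : 0 <= a + xi.
    apply: (@onesided _ _ b 1) => // u u0 _; have := key u.
    by rewrite th_i0 add0r normr0 subr0 (gtr0_norm u0) mulrDr; lra.
  have h2 : 0 <= - a + xi.
    apply: (@onesided _ _ b 1) => // u u0 _; have := key (- u).
    rewrite th_i0 add0r normr0 subr0 normrN (gtr0_norm u0) sqrrN.
    by rewrite mulrDr; lra.
  split; last by move=> /negP []; apply/eqP.
  by rewrite ler_norml; apply/andP; split; lra.
- set s := Num.sg (th i 0).
  have hd : 0 < `|th i 0| by rewrite normr_gt0.
  have habs : forall t, 0 < t -> t <= `|th i 0| ->
      `|th i 0 + t| - `|th i 0| = s * t /\ `|th i 0 - t| - `|th i 0| = - (s * t).
    move=> t t0 tle; rewrite /s.
    move: (th_in0); rewrite neq_lt => /orP [hth|hth].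
    + have e0 := ltr0_norm hth; move: (tle); rewrite e0 => tle'.
      have e1 : `|th i 0 + t| = - (th i 0 + t) by rewrite ler0_norm //; lra.
      have e2 : `|th i 0 - t| = - (th i 0 - t) by rewrite ler0_norm //; lra.
      rewrite ltr0_sg // mulN1r e1 e2; split; lra.
    + have e0 := gtr0_norm hth; move: (tle); rewrite e0 => tle'.
      have e1 : `|th i 0 + t| = (th i 0 + t) by rewrite ger0_norm //; lra.
      have e2 : `|th i 0 - t| = (th i 0 - t) by rewrite ger0_norm //; lra.
      rewrite gtr0_sg // mul1r e1 e2; split; lra.
  have h1 : 0 <= a + xi * s.
    apply: (@onesided _ _ b (`|th i 0|)) => // u u0 tle; have := key u.
    by case: (habs u u0 tle) => -> _; rewrite mulrDr; lra.
  have h2 : 0 <= - (a + xi * s).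
    apply: (@onesided _ _ b (`|th i 0|)) => // u u0 tle; have := key (- u).
    case: (habs u u0 tle) => _ ->; rewrite sqrrN.
    move=> hk; have -> : u * - (a + xi * s) + u ^+ 2 * b = - u * a + u ^+ 2 * b + xi * - (s * u) by ring. by [].
  have ha : a = - xi * s by lra.
  split => // ; rewrite ha normrM normrN (gtr0_norm xi0) /s normr_sg th_in0 mulr1.
  by [].
Qed.

Lemma bil_exp1 {R : realType} {p : nat} (Sig : 'M[R]_p) x y :
  bil Sig (x + y) (x + y) = bil Sig x x + bil Sig x y + bil Sig y x + bil Sig y y.
Proof. rewrite !bilDl !bilDr; ring. Qed.

Definition KKT {R : realType} {p : nat} (Sig : 'M[R]_p) th0 xi (th : 'cV[R]_p) :=
  forall i, `|(Sig *m (th - th0)) i 0| <= xi /\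
    (th i 0 != 0 -> (Sig *m (th - th0)) i 0 = - xi * Num.sg (th i 0)).

Lemma kkt_term {R : realType} (xi g x y : R) : 0 < xi ->
  `|g| <= xi -> (x != 0 -> g = - xi * Num.sg x) ->
  0 <= (y - x) * g + xi * (`|y| - `|x|).
Proof.
move=> xi0 hg hx; have [->|xn0] := eqVneq x 0.
- rewrite subr0 normr0 subr0.
  have : - (y * g) <= `|y| * xi.
    apply: le_trans (ler_norm _) _; rewrite normrN normrM ler_wpM2l //.
  lra.
- rewrite (hx xn0).
  have e1 : Num.sg x * x = `|x| by rewrite -normrEsg.
  have e2 : Num.sg x * y <= `|y|.
    apply: le_trans (ler_norm _) _; rewrite normrM normr_sg xn0 mul1r //.
  have : xi * (Num.sg x * y) <= xi * `|y| by rewrite ler_wpM2l // ltW.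
  have e3 : xi * (Num.sg x * x) = xi * `|x| by rewrite e1.
  nra.
Qed.

Lemma kkt_suff {R : realType} {p : nat} (Sig : 'M[R]_p) th0 xi th th' :
  posdef Sig -> 0 < xi -> KKT Sig th0 xi th ->
  lasso_obj Sig th0 xi th' <= lasso_obj Sig th0 xi th -> th' = th.
Proof.
move=> [hS hpd] xi0 hK hle.
set h := th' - th; set d := th - th0.
have e : th' - th0 = d + h by rewrite /d /h addrCA addrAC subrr add0r.
move: hle; rewrite !objE e -/d bil_exp1 (bilC _ d h) // => hle.
have hsum : 0 <= bil Sig h d + xi * (l1norm th' - l1norm th).
  rewrite bilE /l1norm -sumrB mulr_sumr -big_split /= sumr_ge0 // => i _.
  have [h1 h2] := hK i.
  rewrite /h mxE [(- th) i 0]mxE; exact: kkt_term.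
have hq : bil Sig h h <= 0 by lra.
apply/eqP; rewrite -subr_eq0; apply/negPn/negP => hn.
have := hpd _ hn; rewrite -/h.
rewrite -mulmxA; rewrite /bil in hq; lra.
Qed.

Lemma inj_unit {R : realType} {n : nat} (A : 'M[R]_n) :
  (forall x : 'cV_n, A *m x = 0 -> x = 0) -> A \in unitmx.
Proof.
move=> hA; rewrite unitmxE unitfE -det_tr; apply/negP => /det0P [v vn0 hv].
have : A *m v^T = 0 by rewrite -[A]trmxK -trmx_mul hv trmx0.
move/hA => /eqP; rewrite trmx_eq0 => /eqP hv0.
by rewrite hv0 eqxx in vn0.
Qed.

Lemma posdef_q0 {R : realType} {p : nat} (Sig : 'M[R]_p) (x : 'cV[R]_p) :
  posdef Sig -> bil Sig x x = 0 -> x = 0.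
Proof.
move=> [_ hpd] hq; apply/eqP/negPn/negP => hn.
by have := hpd _ hn; rewrite -mulmxA; rewrite /bil in hq; rewrite hq ltxx.
Qed.

Lemma posdef_unit {R : realType} {p : nat} (Sig : 'M[R]_p) :
  posdef Sig -> Sig \in unitmx.
Proof.
move=> hP; apply: inj_unit => x hx; apply: (@posdef_q0 _ _ _ _ hP).
by rewrite /bil hx mulmx0 mxE.
Qed.

Lemma entry_atE {R : realType} {p : nat} (T : {set 'I_p}) (x : 'cV[R]_#|T|) l :
  entry_at x (enum_val l) = x l 0.
Proof.
rewrite /entry_at; case: pickP => [k /eqP hk | hn].
  by rewrite (enum_val_inj hk).
by have := hn l; rewrite eqxx.
Qed.

Lemma entry_at0 {R : realType} {p : nat} (T : {set 'I_p}) (x : 'cV[R]_#|T|) j :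
  j \notin T -> entry_at x j = 0.
Proof.
move=> hj; rewrite /entry_at; case: pickP => [k /eqP hk | //].
by move: (enum_valP k); rewrite hk (negbTE hj).
Qed.

Definition ext {R : realType} {p : nat} (T : {set 'I_p}) (x : 'cV[R]_#|T|) : 'cV[R]_p :=
  \col_j entry_at x j.

Lemma mul_sub {R : realType} {p : nat} (Sig : 'M[R]_p) (T : {set 'I_p}) (y : 'cV[R]_p) l :
  (forall j, j \notin T -> y j 0 = 0) ->
  (Sig *m y) (enum_val l) 0 = (submxTT T Sig *m subvT T y) l 0.
Proof.
move=> hy; rewrite !mxE.
transitivity (\sum_(j in T) Sig (enum_val l) j * y j 0).
  rewrite [RHS]big_mkcond; apply: eq_bigr => j _.
  by case: ifP => // hj; rewrite hy ?hj // mulr0.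
rewrite big_enum_val; apply: eq_bigr => k _; by rewrite !mxE.
Qed.

Lemma ext_sub {R : realType} {p : nat} (T : {set 'I_p}) (y : 'cV[R]_p) :
  (forall j, j \notin T -> y j 0 = 0) -> y = ext T (subvT T y).
Proof.
move=> hy; apply/matrixP => i j; rewrite (ord1 j) mxE.
have [hi|hi] := boolP (i \in T).
  by rewrite -(enum_rankK_in hi hi) entry_atE mxE.
by rewrite entry_at0 // hy.
Qed.

Lemma ext_supp {R : realType} {p : nat} (T : {set 'I_p}) (x : 'cV[R]_#|T|) j :
  j \notin T -> ext T x j 0 = 0.
Proof. by move=> hj; rewrite mxE entry_at0. Qed.

Lemma subv_ext {R : realType} {p : nat} (T : {set 'I_p}) (x : 'cV[R]_#|T|) :
  subvT T (ext T x) = x.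
Proof. by apply/matrixP => l j; rewrite (ord1 j) !mxE entry_atE. Qed.

Lemma sub_unit {R : realType} {p : nat} (Sig : 'M[R]_p) (T : {set 'I_p}) :
  posdef Sig -> submxTT T Sig \in unitmx.
Proof.
move=> hP; apply: inj_unit => x hx.
have hz : ext T x = 0.
  apply: (@posdef_q0 _ _ _ _ hP); rewrite bilE big1 // => i _.
  have [hi|hi] := boolP (i \in T).
    rewrite -(enum_rankK_in hi hi) mul_sub; last exact: ext_supp.
    by rewrite subv_ext hx !mxE mulr0.
  by rewrite ext_supp // mul0r.
by rewrite -(subv_ext T x) hz; apply/matrixP => i j; rewrite !mxE.
Qed.

Lemma bound_lemma {R : realType} {p : nat} (Sig : 'M[R]_p) th0 xi th :
  Sig \in unitmx -> KKT Sig th0 xi th ->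
  forall i, `|(th - th0) i 0| <= xi * \sum_i \sum_j `|invmx Sig i j|.
Proof.
move=> hU hK i.
have hd : th - th0 = invmx Sig *m (Sig *m (th - th0)) by rewrite mulKmx.
rewrite hd mxE.
apply: le_trans (ler_norm_sum _ _ _) _.
apply: (@le_trans _ _ (\sum_j `|invmx Sig i j| * xi)).
  apply: ler_sum => j _; rewrite normrM ler_wpM2l //; exact: (hK j).1.
rewrite -mulr_suml mulrC ler_wpM2l //.
  by apply: le_trans (normr_ge0 _) ((hK i).1).
rewrite [X in _ <= X](bigD1 i) //= lerDl sumr_ge0 // => k _; exact: sumr_ge0.
Qed.

Theorem lemma3p2 (R : realType) (p : nat) (Sig : 'M[R]_p) (theta0 : 'cV[R]_p)
  (thetahat : R -> 'cV[R]_p) :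
  posdef Sig ->
  (forall xi : R, 0 < xi -> forall theta : 'cV[R]_p,
     lasso_obj Sig theta0 xi (thetahat xi) <= lasso_obj Sig theta0 xi theta) ->
  let S := supp theta0 in
  exists (xi0 : \bar R) (T0 : {set 'I_p}) (v0 : 'cV[R]_p),
    (forall i : 'I_p, v0 i 0 \in [:: -1; 0; 1]) /\
    [/\ (0 < xi0)%E,
        (forall xi : R, 0 < xi -> (xi%:E < xi0)%E ->
           sgn (thetahat xi) = v0 /\ supp (thetahat xi) = supp v0 /\ supp v0 = T0),
        S \subset T0,
        (forall i : 'I_p, i \in S -> v0 i 0 = Num.sg (theta0 i 0))
      & xi0 = \big[Order.min/(+oo)%E]_(i in S) absratio (theta0 i 0) (invSv Sig T0 v0 i)].
Proof.
move=> hP hmin S.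
have hS : Sig^T = Sig by case: hP.
have hK : forall xi, 0 < xi -> KKT Sig theta0 xi (thetahat xi).
  move=> xi xi0; apply: kkt_nec => // th'; exact: hmin.
have hU := @posdef_unit _ _ Sig hP.
set C := \sum_i \sum_j `|invmx Sig i j|.
have C0 : 0 <= C by apply: sumr_ge0 => i _; apply: sumr_ge0.
set m := \big[Order.min/1]_(i in S) `|theta0 i 0|.
have m0 : 0 < m.
  apply: (big_ind (fun x : R => 0 < x)) => //; first by move=> x y hx hy; rewrite lt_min hx hy.
  by move=> i; rewrite inE normr_gt0.
have mle : forall i, i \in S -> m <= `|theta0 i 0|.
  by move=> i hi; apply: bigmin_le_cond.
set xs := m / (C + 1).
have xs0 : 0 < xs by rewrite divr_gt0 // ltr_wpDl.
have xsC : xs * C < m.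
  rewrite /xs mulrAC ltr_pdivrMr ?ltr_wpDl //; nra.
set ths := thetahat xs.
have hKs := hK xs xs0.
have hclose : forall i, i \in S -> Num.sg (ths i 0) = Num.sg (theta0 i 0).
  move=> i hi; apply: sg_close.
  have := @bound_lemma _ _ Sig theta0 xs ths hU hKs i; rewrite [(ths - _) _ _]mxE [(- theta0) _ _]mxE -/C => hb.
  apply: le_lt_trans hb _.
  apply: lt_le_trans xsC (mle i hi).
set v0 := sgn ths.
have v0E : forall i, v0 i 0 = Num.sg (ths i 0) by move=> i; rewrite mxE.
set T0 := supp v0.
have inT0 : forall i, (i \in T0) = (ths i 0 != 0).
  by move=> i; rewrite inE v0E sgr_eq0.
have ST : S \subset T0.
  apply/subsetP => i hi; rewrite inT0 -sgr_eq0 hclose // sgr_eq0.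
  by move: hi; rewrite inE.
set M := submxTT T0 Sig.
have hMU : M \in unitmx by apply: sub_unit.
set z := invmx M *m subvT T0 v0.
set w := ext T0 z.
have wE : forall i, invSv Sig T0 v0 i = w i 0 by move=> i; rewrite mxE.
have hsupp : forall j, j \notin T0 -> (ths - theta0) j 0 = 0.
  move=> j hj; rewrite !mxE.
  have -> : ths j 0 = 0 by apply/eqP; move: hj; rewrite inT0 negbK.
  have -> : theta0 j 0 = 0.
    apply/eqP; apply/negPn/negP => hn.
    have : j \in S by rewrite inE.
    by move/(subsetP ST); rewrite (negbTE hj).
  by rewrite subr0.
have hsub : subvT T0 (ths - theta0) = - xs *: z.
  have e1 : M *m subvT T0 (ths - theta0) = - xs *: subvT T0 v0.
    apply/matrixP => l j; rewrite (ord1 j) -mul_sub //.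
    have hl : ths (enum_val l) 0 != 0 by rewrite -inT0 enum_valP.
    by rewrite ((hKs (enum_val l)).2 hl) !mxE.
  by rewrite /z scalemxAr -e1 mulKmx.
clearbody z.
have hths : forall i, ths i 0 = theta0 i 0 - xs * w i 0.
  move=> i; have [hi|hi] := boolP (i \in T0).
    rewrite -(enum_rankK_in hi hi).
    set l := enum_rank_in hi i.
    move/matrixP: (hsub) => /(_ l 0); rewrite !mxE => h.
    rewrite entry_atE; lra.
  have := hsupp i hi; rewrite /w ext_supp // mulr0 subr0 !mxE => /eqP.
  by rewrite subr_eq0 => /eqP.
clearbody w.
exists (\big[Order.min/(+oo)%E]_(i in S) absratio (theta0 i 0) (invSv Sig T0 v0 i)), T0, v0.
split.
  move=> i; rewrite v0E; case: sgrP => _; by rewrite !inE eqxx ?orbT.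
split => //.
- apply: (big_ind (fun x : \bar R => (0 < x)%E)).
  + exact: ltry.
  + by move=> x y hx hy; rewrite lt_min hx hy.
  + move=> i hi; rewrite /absratio; case: eqP => hb; first exact: ltry.
    rewrite lte_fin normr_gt0 mulf_neq0 //; first by move: hi; rewrite inE.
    by rewrite invr_eq0; apply/eqP.
- move=> xi xi_0 hlt.
  set th := theta0 - xi *: w.
  have thE : forall i, th i 0 = theta0 i 0 - xi * w i 0 by move=> i; rewrite !mxE.
  have hsg : forall i, Num.sg (th i 0) = v0 i 0.
    move=> i; rewrite thE.
    have [hi|hi] := boolP (i \in S).
    + rewrite v0E hclose //.
      have [hw|hw] := eqVneq (w i 0) 0; first by rewrite hw mulr0 subr0.
      have hb : (xi%:E < absratio (theta0 i 0%R) (invSv Sig T0 v0 i))%E.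
        by apply: lt_le_trans hlt _; exact: bigmin_le_cond.
      move: hb; rewrite /absratio wE (negbTE hw) lte_fin normf_div.
      have hw0 : 0 < `|w i 0| by rewrite normr_gt0.
      rewrite ltr_pdivlMr // => hb.
      apply: sg_close.
      by rewrite addrAC subrr add0r normrN normrM (gtr0_norm xi_0).
    + have h0 : theta0 i 0 = 0 by apply/eqP; move: hi; rewrite inE negbK.
      rewrite v0E hths h0 !sub0r -mulrN [in RHS]mulrC -mulNr (sgrM xi) (sgrM _ xs) (gtr0_sg xi_0) (gtr0_sg xs0) mulr1 mul1r.
      by [].
  have hdiff : th - theta0 = (xi / xs) *: (ths - theta0).
    apply/matrixP => i j; rewrite (ord1 j) [LHS]mxE thE [RHS]mxE [(ths - _) _ _]mxE.
    rewrite hths [(- theta0) _ _]mxE; field; by rewrite gt_eqF.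
  have hKth : KKT Sig theta0 xi th.
    move=> i; rewrite hdiff -scalemxAr mxE.
    have [h1 h2] := hKs i.
    have hq : 0 <= xi / xs by rewrite divr_ge0 // ltW.
    split.
    * rewrite normrM (ger0_norm hq).
      apply: le_trans (ler_wpM2l hq h1) _.
      by rewrite divfK // gt_eqF.
    * move=> hn.
      have hn' : ths i 0 != 0 by rewrite -sgr_eq0 -v0E -hsg sgr_eq0.
      rewrite (h2 hn') -v0E -hsg; field; by rewrite gt_eqF.
  have hthx : thetahat xi = th.
    exact: (@kkt_suff _ _ Sig theta0 xi th (thetahat xi) hP xi_0 hKth (hmin xi xi_0 th)).
  rewrite hthx; split.
    by apply/matrixP => i j; rewrite (ord1 j) /sgn [LHS]mxE hsg.
  split => //.
  by apply/setP => i; rewrite !inE -hsg sgr_eq0.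
- move=> i hi; by rewrite v0E hclose.
Qed.
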